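(* Let $F$ be a minimally unsatisfiable clause-set with no 1-singular variables. Then the sets of variables of maximal singular tuples for $F$ are exactly the minimal transversals of the singularity hypergraph $\mathrm{shyp}(F)$ (the inclusion-minimal sets of vertices meeting every hyperedge), and the maximal singular tuples for $F$ are exactly the arbitrary linear orderings of these minimal transversals.
   Context: Literals are variables $v$ and complements $\overline{v}$; a clause is a finite set of literals with no complementary pair; a clause-set is a finite set of clauses; $\mathrm{var}(F)$ is the set of variables of $F$ and $\mathrm{var}(L)$ the set of variables underlying a literal set $L$; $\mathrm{ldeg}_F(x)$ is the number of clauses of $F$ containing literal $x$. $\mathrm{DP}_v(F) := \{C \in F : v \notin \mathrm{var}(C)\} \cup \{(C \cup D)\setminus\{v,\overline{v}\} : C, D \in F,\ C \cap \overline{D} = \{v\}\}$; $\mathrm{DP}_{v_1,\dots,v_k}(F)$ applies these in order. A variable $v$ is singular for $F$ if $\min(\mathrm{ldeg}_F(v),\mathrm{ldeg}_F(\overline{v}))=1$; it is 1-singular if $\mathrm{ldeg}_F(v)=\mathrm{ldeg}_F(\overline{v})=1$; $F$ is nonsingular if it has no singular variables. For minimally unsatisfiable $F$, a tuple $(v_1,\dots,v_n)$ is a singular tuple for $F$ if each $v_i$ is singular for $\mathrm{DP}_{v_1,\dots,v_{i-1}}(F)$, and it is maximal if $\mathrm{DP}_{v_1,\dots,v_n}(F)$ is nonsingular. When $F$ has no 1-singular variables, each singular variable $v$ has a unique singular literal $x_v$ (the literal of $v$ with $\mathrm{ldeg}_F(x_v)=1$); let $L$ be the set of these. The singularity hypergraph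 $\mathrm{shyp}(F)$ has vertex set $\mathrm{var}(F)$ and hyperedges $\mathrm{var}(C\cap L)$ for all $C\in F$ with $C\cap L\neq\emptyset$. *)

(* Defs.v *)
From mathcomp Require Import all_boot.
Set Implicit Arguments. Unset Strict Implicit. Unset Printing Implicit Defensive.

(* Variables range over a finite type V.  A literal is a pair (v, b):
   (v, true) is the positive literal v, (v, false) its complement. *)
Section Clauses.
Variable V : finType.

Definition lit := (V * bool)%type.
Definition compl (x : lit) : lit := (x.1, ~~ x.2).
Definition compl_set (C : {set lit}) : {set lit} := [set compl x | x in C].
Definition varC (C : {set lit}) : {set V} := [set x.1 | x in C].
Definition varF (F : {set {set lit}}) : {set V} := \bigcup_(C in F) varC C.

Definition is_clause (C : {set lit}) : bool := [forall x in C, compl x \notin C].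
Definition is_clauseset (F : {set {set lit}}) : bool := [forall C in F, is_clause C].

Definition ldeg (F : {set {set lit}}) (x : lit) : nat := #|[set C in F | x \in C]|.

Definition DP (v : V) (F : {set {set lit}}) : {set {set lit}} :=
  [set C in F | v \notin varC C] :|:
  [set (C :|: D) :\: [set (v, true); (v, false)] | C in F, D in F
     & C :&: compl_set D == [set (v, true)]].

Definition DPs (s : seq V) (F : {set {set lit}}) : {set {set lit}} :=
  foldl (fun G v => DP v G) F s.

Definition satisfies (a : V -> bool) (F : {set {set lit}}) : Prop :=
  forall C, C \in F -> exists2 x, x \in C & a x.1 = x.2.
Definition satisfiable (F : {set {set lit}}) : Prop := exists a : V -> bool, satisfies a F.
Definition min_unsat (F : {set {set lit}}) : Prop :=
  ~ satisfiable F /\ forall C, C \in F -> satisfiable (F :\ C).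

Definition singular (F : {set {set lit}}) (v : V) : bool :=
  minn (ldeg F (v, true)) (ldeg F (v, false)) == 1.
Definition one_singular (F : {set {set lit}}) (v : V) : bool :=
  (ldeg F (v, true) == 1) && (ldeg F (v, false) == 1).
Definition nonsingular (F : {set {set lit}}) : Prop := forall v, ~~ singular F v.

Fixpoint singular_tuple (F : {set {set lit}}) (s : seq V) : Prop :=
  match s with
  | [::] => True
  | v :: s' => singular F v /\ singular_tuple (DP v F) s'
  end.
Definition maximal_singular_tuple (F : {set {set lit}}) (s : seq V) : Prop :=
  singular_tuple F s /\ nonsingular (DPs s F).

(* the singular literals L (meaningful when F has no 1-singular variables) *)
Definition sing_lits (F : {set {set lit}}) : {set lit} :=
  [set x | singular F x.1 & ldeg F x == 1].

(* hyperedges of shyp(F); its vertex set is varF F *)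
Definition shyp_edges (F : {set {set lit}}) : {set {set V}} :=
  [set varC (C :&: sing_lits F) | C in F & C :&: sing_lits F != set0].

Definition is_transversal (F : {set {set lit}}) (T : {set V}) : Prop :=
  T \subset varF F /\ forall E, E \in shyp_edges F -> E :&: T != set0.
Definition is_min_transversal (F : {set {set lit}}) (T : {set V}) : Prop :=
  is_transversal F T /\ forall T' : {set V}, T' \proper T -> ~ is_transversal F T'.

End Clauses.

(* Main.v *)
Require Import Defs.
From mathcomp Require Import all_boot zify.
Set Implicit Arguments. Unset Strict Implicit. Unset Printing Implicit Defensive.

Section Gen.
Variable V : finType.
Implicit Types (F G : {set {set lit V}}) (E C D : {set lit V}) (y z : lit V).

Lemma complK z : compl (compl z) = z.
Proof. by case: z => a b; rewrite /compl /= negbK. Qed.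

Lemma compl1 z : (compl z).1 = z.1. Proof. by []. Qed.

Lemma compl_neq z : compl z != z.
Proof. by case: z => a b; rewrite /compl /= xpair_eqE eqxx /=; case: b. Qed.

Lemma in_compl_set y D : (y \in compl_set D) = (compl y \in D).
Proof.
apply/imsetP/idP => [[z Hz ->]|H]; first by rewrite complK.
by exists (compl y); rewrite ?complK.
Qed.

Lemma in_varC w E : reflect (exists2 z, z \in E & z.1 = w) (w \in varC E).
Proof.
apply: (iffP imsetP) => [[z Hz ->]|[z Hz <-]]; by exists z.
Qed.

Lemma varC_in E z : z \in E -> z.1 \in varC E.
Proof. by move=> H; apply/in_varC; exists z. Qed.

Lemma same_var y z : y.1 = z.1 -> z = y \/ z = compl y.
Proof.
case: y z => a b [c d] /= ->; case: b; case: d; rewrite /compl /=; auto.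
Qed.

Lemma inVl (v : V) y : (y \in [set (v, true); (v, false)]) = (y.1 == v).
Proof. by case: y => a b; rewrite !inE !xpair_eqE /=; case: b; rewrite ?andbT ?andbF ?orbF. Qed.

Lemma clauseP E y : is_clause E -> y \in E -> compl y \notin E.
Proof. by move=> /forall_inP H /H. Qed.

Lemma clausesetP F E : is_clauseset F -> E \in F -> is_clause E.
Proof. by move=> /forall_inP H /H. Qed.

Lemma ldeg1P F y E : ldeg F y = 1 -> E \in F -> y \in E ->
  forall E', E' \in F -> y \in E' -> E' = E.
Proof.
rewrite /ldeg => /eqP /cards1P [C0 HC0] HE HyE E' HE' HyE'.
have: E \in [set C in F | y \in C] by rewrite inE HE HyE.
have: E' \in [set C in F | y \in C] by rewrite inE HE' HyE'.
by rewrite HC0 !inE => /eqP -> /eqP ->.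
Qed.

Lemma ldeg1_ex F y : ldeg F y = 1 -> exists2 E, E \in F & y \in E.
Proof.
rewrite /ldeg => /eqP /cards1P [C0 HC0].
have: C0 \in [set C in F | y \in C] by rewrite HC0 set11.
by rewrite inE => /andP[]; exists C0.
Qed.

Lemma ldeg_ge1 F y E : E \in F -> y \in E -> 0 < ldeg F y.
Proof. move=> HE Hy; apply/card_gt0P; exists E; by rewrite inE HE Hy. Qed.

Lemma singularE F z : singular F z.1 = (minn (ldeg F z) (ldeg F (compl z)) == 1).
Proof. by case: z => a [|]; rewrite /singular /compl //= minnC. Qed.

Lemma one_singularE F z : one_singular F z.1 = (ldeg F z == 1) && (ldeg F (compl z) == 1).
Proof. by case: z => a [|]; rewrite /one_singular /compl //= andbC. Qed.

Lemma sat_flip (a : V -> bool) (w : V) b E y :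
  y \in E -> y.1 != w -> a y.1 = y.2 ->
  exists2 z, z \in E & (fun u => if u == w then b else a u) z.1 = z.2.
Proof. move=> Hy Hw Ha; exists y => //; by rewrite (negbTE Hw). Qed.

Lemma inS (T : finType) w (A B : {set T}) : A = B -> (w \in A) = (w \in B).
Proof. by move->. Qed.

Lemma compl_inj : injective (@compl V).
Proof. exact: can_inj complK. Qed.

Lemma swap_cs A B y : A :&: compl_set B = [set y] -> B :&: compl_set A = [set compl y].
Proof.
move=> H; apply/setP => z; have := inS (compl z) H.
rewrite !inE !in_compl_set complK andbC => ->.
by rewrite -{1}[y]complK (inj_eq compl_inj).
Qed.

Lemma in_L F z : (z \in sing_lits F) = singular F z.1 && (ldeg F z == 1).
Proof. by rewrite inE. Qed.

Lemma uniqL F z E1 E2 : z \in sing_lits F -> E1 \in F -> E2 \in F ->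
  z \in E1 -> z \in E2 -> E1 = E2.
Proof. by rewrite in_L => /andP[_ /eqP H] H1 H2 Hz1 Hz2; apply: (ldeg1P H H2 Hz2). Qed.

Lemma EDGE F z1 z2 E1 E2 : (forall w, ~~ one_singular F w) ->
  E1 \in F -> E2 \in F -> z1 \in E1 :&: sing_lits F -> z2 \in E2 :&: sing_lits F ->
  z1.1 = z2.1 -> E1 = E2.
Proof.
move=> Hno H1 H2; rewrite !inE => /andP[Hz1 /andP[Hs1 Hd1]] /andP[Hz2 /andP[_ Hd2]] Hv.
case: (same_var Hv) => Ez.
  apply: (@uniqL F z1 E1 E2 _ H1 H2 Hz1); last by rewrite -Ez.
  by rewrite in_L; apply/andP.
by move: (Hno z1.1); rewrite one_singularE Hd1 -Ez Hd2.
Qed.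

End Gen.

Section Step.
Variable V : finType.
Variables (G : {set {set lit V}}) (v : V) (x : lit V) (C : {set lit V}).
Hypotheses (HG : is_clauseset G) (HMU : min_unsat G) (Hxv : x.1 = v)
  (HC : C \in G) (HxC : x \in C) (Hdx : ldeg G x = 1)
  (Hk : 2 <= ldeg G (compl x)).
Implicit Types (E D : {set lit V}) (y z : lit V).

Definition Vl := [set (v, true); (v, false)].
Definition res D := (C :|: D) :\: Vl.
Definition Dset := [set D in G | compl x \in D].

Lemma onlyC E : E \in G -> x \in E -> E = C.
Proof. by move=> HE HxE; apply: (ldeg1P Hdx HC HxC). Qed.

Lemma litv y : y.1 = v -> y = x \/ y = compl x.
Proof. by move=> H; apply: same_var; rewrite H. Qed.

Lemma notcxC : compl x \notin C.
Proof. exact: clauseP (clausesetP HG HC) HxC. Qed.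

Lemma DsetP D : D \in Dset -> [/\ D \in G, compl x \in D, x \notin D & D != C].
Proof.
rewrite inE => /andP[HD Hc]; split => //.
  by rewrite -[x]complK; apply: clauseP (clausesetP HG HD) Hc.
by apply/eqP => E; move: notcxC; rewrite -E Hc.
Qed.

Lemma in_res D y : (y \in res D) = ((y \in C) || (y \in D)) && (y.1 != v).
Proof. by rewrite /res /Vl in_setD inVl in_setU andbC. Qed.

Lemma vin_lits E : v \in varC E -> x \in E \/ compl x \in E.
Proof. by move=> /in_varC [z Hz /litv [] <-]; auto. Qed.

Lemma satG_falsify D a : D \in G -> satisfies a (G :\ D) -> forall z, z \in D -> a z.1 != z.2.
Proof.
move=> HD Ha z Hz; apply/negP => /eqP Hza; apply: HMU.1; exists a => E HE.
case: (eqVneq E D) => [->|ne]; first by exists z.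
by apply: Ha; rewrite !inE ne.
Qed.

Lemma noflip a : (forall E, E \in G -> v \notin varC E ->
   exists2 z, z \in E & a z.1 = z.2) ->
  (exists2 y, y \in C & (y.1 != v) && (a y.1 == y.2)) -> False.
Proof.
move=> Ha [y Hy /andP[Hyv /eqP Hay]]; apply: HMU.1.
exists (fun u => if u == v then (compl x).2 else a u) => E HE.
case: (boolP (v \in varC E)) => [/vin_lits [HxE|HcE]|Hn].
- by rewrite (onlyC HE HxE); exact: sat_flip Hy Hyv Hay.
- by exists (compl x); rewrite //= Hxv eqxx.
- case: (Ha E HE Hn) => z Hz Haz; exists z; rewrite // ifN //.
  by apply: contraNneq Hn => <-; apply: varC_in Hz.
Qed.

Lemma M1 D : D \in Dset -> C :&: compl_set D = [set x].
Proof.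
move=> HD; case/DsetP: (HD) => HDG HcD HxD HDC.
apply/setP => y; rewrite !inE in_compl_set.
case: (eqVneq y x) => [->|ne]; first by rewrite HxC HcD.
apply/negP => /andP[HyC HcyD].
have [a Ha] := HMU.2 D HDG.
have Hf := satG_falsify HDG Ha.
apply: (noflip (a := a)).
  move=> E HE Hv; apply: Ha; rewrite !inE HE andbT.
  by apply: contraNneq Hv => ->; rewrite -Hxv; apply: (varC_in HcD).
exists y => //; apply/andP; split.
  apply/negP => /eqP /litv [Ey|Ey]; first by move: ne; rewrite Ey eqxx.
  by move: notcxC; rewrite -Ey HyC.
by move: (Hf _ HcyD); rewrite /compl /=; case: (a y.1); case: (y.2).
Qed.

Lemma Mgen D E : D \in Dset -> E \in G -> E != D -> x \notin E ->
  (forall z, z \in E -> z.1 != v -> (z \in C) || (z \in D)) -> False.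
Proof.
move=> HD HE ne HxE Hsub; case/DsetP: (HD) => HDG HcD HxD HDC.
have [a Ha] := HMU.2 D HDG.
have Hf := satG_falsify HDG Ha.
have [z Hz Haz] : exists2 z, z \in E & a z.1 = z.2 by apply: Ha; rewrite !inE ne.
case: (eqVneq z.1 v) => [Hzv|Hzv].
  case: (litv Hzv) => Ez; first by move: Hz; rewrite Ez (negbTE HxE).
  by move: (Hf _ HcD); rewrite -Ez Haz eqxx.
case/orP: (Hsub z Hz Hzv) => Hz'.
  apply: (noflip (a := a)).
    move=> E' HE' Hv; apply: Ha; rewrite !inE HE' andbT.
    by apply: contraNneq Hv => ->; rewrite -Hxv; apply: (varC_in HcD).
  by exists z => //; rewrite Hzv Haz eqxx.
by move: (Hf _ Hz'); rewrite Haz eqxx.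
Qed.

Lemma M2 D1 D2 : D1 \in Dset -> D2 \in Dset -> res D1 = res D2 -> D1 = D2.
Proof.
move=> H1 H2 Hr; apply/eqP; apply/negPn/negP => ne.
case/DsetP: (H2) => H2G _ Hx2 _.
apply: (Mgen H1 H2G) => //; first by rewrite eq_sym.
move=> z Hz Hzv; have: z \in res D2 by rewrite in_res Hz orbT Hzv.
by rewrite -Hr in_res => /andP[].
Qed.

Lemma M3 D E : D \in Dset -> E \in G -> v \notin varC E -> res D != E.
Proof.
move=> H1 HE Hv; apply/negP => /eqP Hr.
case/DsetP: (H1) => HDG HcD _ _.
apply: (Mgen H1 HE).
- by apply: contraNneq Hv => ->; rewrite -Hxv; apply: (varC_in HcD).
- by apply: contra Hv => Hx; rewrite -Hxv; apply: (varC_in Hx).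
- by move=> z Hz Hzv; move: Hz; rewrite -Hr in_res => /andP[].
Qed.


Lemma xE : x = (v, x.2).
Proof. by case: x Hxv => a b /= ->. Qed.

Lemma DPP E : E \in DP v G <->
  (E \in G /\ v \notin varC E) \/ exists2 D, D \in Dset & E = res D.
Proof.
split.
  rewrite /DP inE => /orP [|/imset2P[A B HA HB HE]].
    by rewrite inE => /andP[]; left.
  right; move: HB; rewrite inE => /andP[HB /eqP HAB].
  case Hb: x.2 xE => Ex.
    have HxA : x \in A by have := inS (v, true) HAB; rewrite !inE Ex eqxx => /andP[].
    have Hc : compl x \in B.
      by have := inS (v, true) HAB; rewrite !inE in_compl_set Ex eqxx => /andP[].
    exists B; first by rewrite inE HB Hc.
    by rewrite HE (onlyC HA HxA).
  have HBA := swap_cs HAB.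
  have HxB : x \in B by have := inS (v, false) HBA; rewrite !inE Ex eqxx => /andP[].
  have Hc : compl x \in A.
    by have := inS (v, false) HBA; rewrite !inE in_compl_set Ex eqxx => /andP[].
  exists A; first by rewrite inE HA Hc.
  by rewrite HE (onlyC HB HxB) setUC.
move=> [[HE Hv]|[D HD ->]]; rewrite /DP inE.
  by rewrite inE HE Hv.
apply/orP; right; have HCD := M1 HD; case/DsetP: (HD) => HDG _ _ _.
case Hb: x.2 xE => Ex.
  apply/imset2P; apply: (@Imset2spec _ _ _ _ _ _ _ C D) => //.
  by rewrite inE HDG HCD Ex eqxx.
have HDC := swap_cs HCD.
apply/imset2P; apply: (@Imset2spec _ _ _ _ _ _ _ D C) => //; last by rewrite /res setUC.
by rewrite inE HC HDC Ex /compl /= eqxx.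
Qed.


Lemma res_sat a D : D \in Dset ->
  (exists2 z, z \in C & a z.1 = z.2) -> (exists2 z, z \in D & a z.1 = z.2) ->
  exists2 z, z \in res D & a z.1 = z.2.
Proof.
case/DsetP => HDG HcD HxD _ [z1 Hz1 Ha1] [z2 Hz2 Ha2].
case: (eqVneq z1.1 v) => [H1|H1]; last by exists z1; rewrite // in_res Hz1 H1.
case: (eqVneq z2.1 v) => [H2|H2]; last by exists z2; rewrite // in_res Hz2 orbT H2.
case: (litv H1) => E1; last by move: notcxC; rewrite -E1 Hz1.
case: (litv H2) => E2; first by move: HxD; rewrite -E2 Hz2.
move: Ha1 Ha2; rewrite E1 E2 /= => ->; by case: (x.2).
Qed.

Lemma DP_clauseset : is_clauseset (DP v G).
Proof.
apply/forall_inP => E /DPP [[HE _]|[D HD ->]]; first exact: clausesetP HG HE.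
have HCD := M1 HD; case/DsetP: (HD) => HDG _ _ _.
have cC := clausesetP HG HC; have cD := clausesetP HG HDG.
apply/forall_inP => z; rewrite !in_res => /andP[Hz Hzv].
apply/negP => /andP[Hcz _].
case/orP: Hz => Hz; case/orP: Hcz => Hcz.
- by move: (clauseP cC Hz); rewrite Hcz.
- have: z \in C :&: compl_set D by rewrite inE Hz in_compl_set.
  by rewrite HCD inE => /eqP Ez; move: Hzv; rewrite Ez Hxv eqxx.
- have: compl z \in C :&: compl_set D by rewrite inE Hcz in_compl_set complK.
  by rewrite HCD inE => /eqP Ez; move: Hzv; rewrite -compl1 Ez Hxv eqxx.
- by move: (clauseP cD Hz); rewrite Hcz.
Qed.

Lemma DP_unsat : ~ satisfiable (DP v G).
Proof.
move=> [a Ha].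
have HGn : forall E, E \in G -> v \notin varC E -> exists2 z, z \in E & a z.1 = z.2.
  by move=> E HE Hv; apply: Ha; apply/DPP; left.
case: (boolP [exists y in C, (y.1 != v) && (a y.1 == y.2)]).
  by move=> /exists_inP [y Hy Hy']; apply: (noflip HGn); exists y.
move=> /exists_inP Hn; apply: HMU.1.
exists (fun u => if u == v then x.2 else a u) => E HE.
case: (boolP (v \in varC E)) => [/vin_lits [HxE|HcE]|Hv].
- by exists x; rewrite // Hxv eqxx.
- have HD : E \in Dset by rewrite inE HE HcE.
  have [z Hz Haz] : exists2 z, z \in res E & a z.1 = z.2 by apply: Ha; apply/DPP; right; exists E.
  move: Hz; rewrite in_res => /andP[/orP[HzC|HzE] Hzv].
    by case: Hn; exists z; rewrite // Hzv Haz eqxx.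
  by exists z; rewrite // ifN.
- case: (HGn E HE Hv) => z Hz Haz; exists z; rewrite // ifN //.
  by apply: contraNneq Hv => <-; apply: varC_in Hz.
Qed.

Lemma DP_min E : E \in DP v G -> satisfiable (DP v G :\ E).
Proof.
move=> /DPP [[HE Hv]|[D0 HD0 ->]].
  have [a Ha] := HMU.2 E HE; exists a => E' /setD1P [ne /DPP [[HE' _]|[D HD ->]]].
    by apply: Ha; rewrite !inE ne.
  case/DsetP: (HD) => HDG HcD _ _.
  apply: res_sat => //; apply: Ha; rewrite !inE ?HC ?HDG andbT.
    by apply: contraNneq Hv => <-; rewrite -Hxv; apply: varC_in HxC.
  by apply: contraNneq Hv => <-; rewrite -Hxv; apply: (varC_in HcD).
case/DsetP: (HD0) => HD0G HcD0 _ HD0C.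
have [a Ha] := HMU.2 D0 HD0G; exists a => E' /setD1P [ne /DPP [[HE' Hv]|[D HD ED]]].
  apply: Ha; rewrite !inE HE' andbT.
  by apply: contraNneq Hv => ->; rewrite -Hxv; apply: (varC_in HcD0).
case/DsetP: (HD) => HDG HcD _ _.
rewrite ED; apply: res_sat => //; apply: Ha; rewrite !inE ?HC ?HDG andbT.
  by rewrite eq_sym.
by apply: contraNneq ne => Ed; rewrite ED Ed.
Qed.

Lemma DP_MU : min_unsat (DP v G).
Proof. by split; [exact: DP_unsat | exact: DP_min]. Qed.


Lemma ldeg_notC y : y.1 != v -> y \notin C -> ldeg (DP v G) y = ldeg G y.
Proof.
move=> Hyv HyC.
rewrite /ldeg; pose f E := if compl x \in E then res E else E.
have Hnov : forall E, E \in G -> compl x \notin E -> y \in E -> v \notin varC E.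
  move=> E HE Hc Hy; apply/negP => /vin_lits [HxE|]; last by rewrite (negbTE Hc).
  by move: HyC; rewrite -(onlyC HE HxE) Hy.
have -> : [set E in DP v G | y \in E] = f @: [set E in G | y \in E].
  apply/setP => E; rewrite inE; apply/andP/imsetP.
    move=> [/DPP [[HE Hv] Hy|[D HD -> Hy]]].
      exists E; first by rewrite inE HE Hy.
      rewrite /f ifN //; apply: contra Hv => Hc; rewrite -Hxv; exact: (varC_in Hc).
    exists D; last by rewrite /f; case/DsetP: HD => _ -> _ _.
    case/DsetP: (HD) => HDG _ _ _; move: Hy; rewrite in_res (negbTE HyC) /=.
    by rewrite inE HDG => /andP[->].
  move=> [E0]; rewrite inE => /andP[HE0 Hy] ->; rewrite /f.
  case: ifP => Hc.
    split; last by rewrite in_res Hy orbT Hyv.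
    by apply/DPP; right; exists E0 => //; rewrite inE HE0 Hc.
  by split => //; apply/DPP; left; split => //; apply: Hnov => //; rewrite Hc.
rewrite card_in_imset // => E1 E2; rewrite !inE => /andP[H1 Hy1] /andP[H2 Hy2].
rewrite /f; case: ifP => Hc1; case: ifP => Hc2.
- by apply: M2; rewrite inE ?H1 ?H2 ?Hc1 ?Hc2.
- move=> Er; have HD : E1 \in Dset by rewrite inE H1 Hc1.
  by move: (M3 HD H2 (Hnov _ H2 (negbT Hc2) Hy2)); rewrite Er eqxx.
- move=> Er; have HD : E2 \in Dset by rewrite inE H2 Hc2.
  by move: (M3 HD H1 (Hnov _ H1 (negbT Hc1) Hy1)); rewrite Er eqxx.
- by [].
Qed.

Lemma ldeg_C y : y.1 != v -> y \in C -> 2 <= ldeg (DP v G) y.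
Proof.
move=> Hyv HyC; apply: (leq_trans Hk).
have -> : ldeg G (compl x) = #|res @: Dset|.
  by rewrite card_in_imset //; move=> D1 D2 H1 H2; apply: M2.
apply: subset_leq_card; apply/subsetP => E /imsetP [D HD ->].
rewrite inE in_res HyC Hyv /= andbT; by apply/DPP; right; exists D.
Qed.

Lemma ldeg_v b : ldeg (DP v G) (v, b) = 0.
Proof.
apply/eqP; rewrite cards_eq0; apply/eqP/setP => E; rewrite in_set in_set0.
apply/negP => /andP[/DPP [[HE Hv]|[D HD ->]] Hin].
  by move: Hv; rewrite (varC_in Hin).
by move: Hin; rewrite in_res eqxx andbF.
Qed.


Lemma ar1 a b c : 1 <= b -> 1 <= c ->
  (minn a b == 1) && (a == 1) = (minn a c == 1) && (a == 1).
Proof. move=> Hb Hc; case: (eqVneq a 1) => [->|]; rewrite ?andbF //; lia. Qed.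

Lemma L_DP : sing_lits (DP v G) = sing_lits G :\: C.
Proof.
apply/setP => z; rewrite in_setD !in_L !singularE.
case: (eqVneq z.1 v) => [Hz|Hz].
  have -> : ldeg (DP v G) z = 0 by case: z Hz => w b /= ->; apply: ldeg_v.
  case: (litv Hz) => ->; first by rewrite HxC /= andbF.
  have -> : ldeg G (compl x) == 1 = false by apply/negbTE; lia.
  by rewrite !andbF.
have Hcz : (compl z).1 != v by [].
case: (boolP (z \in C)) => HzC.
  have /negbTE -> : ldeg (DP v G) z != 1 by have := ldeg_C Hz HzC; lia.
  by rewrite andbF.
rewrite (ldeg_notC Hz HzC).
case: (boolP (compl z \in C)) => HcC.
  apply: ar1; first by have := ldeg_C Hcz HcC; lia.
  exact: ldeg_ge1 HC HcC.
by rewrite (ldeg_notC Hcz HcC).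
Qed.

Lemma no1_DP : (forall w, ~~ one_singular G w) -> forall w, ~~ one_singular (DP v G) w.
Proof.
move=> Hno w; case: (eqVneq w v) => [->|Hw].
  by rewrite /one_singular !ldeg_v.
have := Hno w; rewrite /one_singular.
have H1 : (w, true).1 != v by [].
have H2 : (w, false).1 != v by [].
case: (boolP ((w, true) \in C)) => Ht.
  have /negbTE -> : ldeg (DP v G) (w, true) != 1 by have := ldeg_C H1 Ht; lia.
  by [].
case: (boolP ((w, false) \in C)) => Hf.
  have /negbTE -> : ldeg (DP v G) (w, false) != 1 by have := ldeg_C H2 Hf; lia.
  by rewrite andbF.
by rewrite (ldeg_notC H1 Ht) (ldeg_notC H2 Hf).
Qed.

Lemma vC : v \in varC C.
Proof. by rewrite -Hxv; apply: varC_in HxC. Qed.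

Lemma key1 E : E \in G -> v \notin varC E -> E :&: sing_lits (DP v G) = E :&: sing_lits G.
Proof.
move=> HE Hv; apply/setP => z; rewrite L_DP !in_setI in_setD.
case: (boolP (z \in E)) => //= HzE; case: (boolP (z \in sing_lits G)) => HzL; rewrite ?andbF ?andbT //=.
apply/negP => HzC; move: Hv; by rewrite (uniqL HzL HE HC HzE HzC) vC.
Qed.

Lemma key2 D : D \in Dset -> res D :&: sing_lits (DP v G) = D :&: sing_lits G.
Proof.
move=> HD; case/DsetP: (HD) => HDG HcD HxD HDC.
apply/setP => z; rewrite L_DP in_setI in_res in_setI in_setD.
case: (boolP (z \in sing_lits G)) => HzL; rewrite ?andbF ?andbT //=.
case: (boolP (z \in C)) => HzC /=; rewrite ?andbF ?andbT //=.
  apply/esym/negP => HzD; move: HDC; by rewrite (uniqL HzL HDG HC HzD HzC) eqxx.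
case: (boolP (z \in D)) => HzD //=.
apply/negP => /eqP /litv [Ez|Ez]; first by move: HxD; rewrite -Ez HzD.
by move: HzL; rewrite Ez in_L => /andP[_ /eqP H]; move: Hk; rewrite H.
Qed.

Lemma key3 E : (forall w, ~~ one_singular G w) -> E \in G -> E != C ->
  E :&: sing_lits G != set0 -> varC (E :&: sing_lits G) != varC (C :&: sing_lits G).
Proof.
move=> Hno HE ne /set0Pn [z Hz]; apply/negP => /eqP Heq.
have : z.1 \in varC (C :&: sing_lits G) by rewrite -Heq; apply: varC_in Hz.
move=> /in_varC [z' Hz' Ez].
by move: ne; rewrite (EDGE Hno HE HC Hz Hz' (esym Ez)) eqxx.
Qed.

Lemma edges_DP : (forall w, ~~ one_singular G w) ->
  shyp_edges (DP v G) = shyp_edges G :\ varC (C :&: sing_lits G).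
Proof.
move=> Hno; apply/setP => E'; rewrite in_setD1; apply/imsetP/andP.
  move=> [E]; rewrite inE => /andP[/DPP [[HE Hv]|[D HD ->]] Hne] ->.
    have HEC : E != C by apply: contraNneq Hv => ->; exact: vC.
    rewrite key1 // in Hne *; split; first exact: key3.
    by apply/imsetP; exists E; rewrite // inE HE Hne.
  case/DsetP: (HD) => HDG _ _ HDC.
  rewrite key2 // in Hne *; split; first exact: key3.
  by apply/imsetP; exists D; rewrite // inE HDG Hne.
move=> [ne /imsetP [E]]; rewrite inE => /andP[HE Hne] EE.
have HEC : E != C by apply: contraNneq ne => EC; rewrite EE EC.
case: (boolP (v \in varC E)) => [/vin_lits [HxE|HcE]|Hv].
- by move: HEC; rewrite (onlyC HE HxE) eqxx.
- have HD : E \in Dset by rewrite inE HE HcE.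
  exists (res E); last by rewrite key2.
  by rewrite inE key2 // Hne andbT; apply/DPP; right; exists E.
- exists E; last by rewrite key1.
  by rewrite inE key1 // Hne andbT; apply/DPP; left.
Qed.

End Step.

Section Comb.
Variable V : finType.
Implicit Types (H : {set {set V}}) (E T : {set V}).

Fixpoint Rh H (s : seq V) : Prop :=
  match s with
  | [::] => H = set0
  | v :: s' => exists2 E, E \in H & v \in E /\ Rh (H :\ E) s'
  end.

Definition Xh H T := (forall u, u \in T -> exists2 E, E \in H & u \in E) /\
  (forall E, E \in H -> exists u, E :&: T = [set u]).

Definition disj H := forall E1 E2 u, E1 \in H -> E2 \in H -> u \in E1 -> u \in E2 -> E1 = E2.

Lemma disjD H E : disj H -> disj (H :\ E).
Proof. by move=> Hd E1 E2 u /setD1P[_ H1] /setD1P[_ H2]; apply: Hd. Qed.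

Lemma COMB s : forall H, disj H -> (Rh H s <-> uniq s /\ Xh H [set u in s]).
Proof.
elim: s => [|v s IH] H Hd /=.
  split=> [->|[_ [_ HX]]].
    by split=> //; split=> [u|E]; rewrite !inE.
  apply/setP => E; rewrite inE; apply/negbTE/negP => HE.
  by case: (HX E HE) => u Eu; move: (set11 u); rewrite -Eu !inE andbF.
split.
  move=> [E HE [HvE /(IH _ (disjD (E:=E) Hd)) [Hu [HX1 HX2]]]].
  have HES : forall u, u \in E -> u \notin s.
    move=> u Hu'; apply/negP => Hs.
    have [E' /setD1P [ne HE'] HuE'] := HX1 u ltac:(by rewrite inE).
    by move: ne; rewrite (Hd _ _ _ HE' HE HuE' Hu') eqxx.
  split; first by rewrite Hu andbT; apply: HES.
  split.
    move=> u; rewrite inE => /orP[/eqP ->|Hs]; first by exists E.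
    have [E' /setD1P [_ HE'] HuE'] := HX1 u ltac:(by rewrite inE).
    by exists E'.
  move=> E' HE'; case: (eqVneq E' E) => [->|ne].
    exists v; apply/setP => u; rewrite !inE.
    case: (eqVneq u v) => [->|nuv]; first by rewrite HvE.
    by rewrite /=; apply/negP => /andP[Hu' Hs]; move: (HES u Hu'); rewrite Hs.
  have [u Hu'] := HX2 E' ltac:(by rewrite !inE ne).
  exists u; rewrite -Hu'; apply/setP => w; rewrite !inE.
  case: (eqVneq w v) => [->|nwv] //=.
  have -> // : (v \in E') = false.
  apply/negbTE/negP => HvE'; move: ne; by rewrite (Hd _ _ _ HE' HE HvE' HvE) eqxx.
move=> [/andP [Hvs Hu] [HX1 HX2]].
have [E HE HvE] := HX1 v ltac:(by rewrite !inE eqxx).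
exists E => //; split => //.
have [w Hw] := HX2 E HE.
have Ew : w = v by move: (inS v Hw); rewrite !inE HvE eqxx /= => /esym /eqP.
apply/(IH _ (disjD (E:=E) Hd)); split => //; split.
  move=> u; rewrite inE => Hs.
  have [E' HE' HuE'] := HX1 u ltac:(by rewrite !inE Hs orbT).
  exists E' => //; rewrite !inE HE' andbT.
  apply/negP => /eqP EE; move: (inS u Hw); rewrite !inE -EE HuE' Hs orbT Ew.
  by move=> /esym /eqP Euv; move: Hvs; rewrite -Euv Hs.
move=> E'; rewrite !inE => /andP[ne HE'].
have [u Hu'] := HX2 E' HE'; exists u; rewrite -Hu'; apply/setP => z; rewrite !inE.
case: (eqVneq z v) => [->|nzv] //=.
have -> : (v \in E') = false.
  by apply/negP => HvE'; move: ne; rewrite (Hd _ _ _ HE' HE HvE' HvE) eqxx.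
by rewrite (negbTE Hvs).
Qed.

Lemma Xh_mt H (W : {set V}) T : disj H -> (forall E, E \in H -> E \subset W) ->
  (Xh H T <-> ((T \subset W /\ forall E, E \in H -> E :&: T != set0) /\
     forall T' : {set V}, T' \proper T ->
       ~ (T' \subset W /\ forall E, E \in H -> E :&: T' != set0))).
Proof.
move=> Hd HW; split.
  move=> [HX1 HX2]; split.
    split.
      apply/subsetP => u Hu; have [E HE HuE] := HX1 u Hu.
      exact: (subsetP (HW E HE)).
    by move=> E HE; have [u ->] := HX2 E HE; apply/set0Pn; exists u; rewrite inE.
  move=> T' /properP [Hsub [t HtT HtT']] [_ HT'].
  have [E HE HtE] := HX1 t HtT; have [u Hu] := HX2 E HE.
  have /set0Pn [w] := HT' E HE; rewrite inE => /andP[HwE HwT'].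
  have : w \in E :&: T by rewrite inE HwE (subsetP Hsub).
  have : t \in E :&: T by rewrite inE HtE HtT.
  rewrite Hu !inE => /eqP Et /eqP Ew; by move: HtT'; rewrite Et -Ew HwT'.
move=> [[HTW HT] Hmin].
have drop : forall u, u \in T ->
    (forall E, E \in H -> u \in E -> exists2 w, w \in E :&: T & w != u) -> False.
  move=> u Hu Hoth; apply: (Hmin (T :\ u)); first exact: properD1.
  split; first exact: subset_trans (subsetDl T [set u]) HTW.
  move=> E HE; apply/set0Pn.
  case: (boolP (u \in E)) => HuE.
    have [w Hw ne] := Hoth E HE HuE; exists w.
    by move: Hw; rewrite !inE ne => /andP[-> ->].
  have /set0Pn [w Hw] := HT E HE; exists w.
  move: Hw; rewrite !inE => /andP[HwE ->]; rewrite HwE andbT.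
  by apply: contraNneq HuE => <-.
split.
  move=> u Hu; case: (boolP [exists E in H, u \in E]) => [/exists_inP [E HE HuE]|Hn].
    by exists E.
  exfalso; apply: (drop u Hu) => E HE HuE; case/negP: Hn.
  by apply/exists_inP; exists E.
move=> E HE; have /set0Pn [w Hw] := HT E HE; exists w.
apply/setP => u; apply/idP/idP; last by rewrite inE => /eqP ->.
move=> Hu; rewrite inE; apply/negPn/negP => ne; apply: (drop u).
  by move: Hu; rewrite inE => /andP[].
move=> E' HE' HuE'; exists w; last by rewrite eq_sym.
move: Hu; rewrite inE => /andP[HuE _].
by rewrite (Hd _ _ _ HE' HE HuE' HuE).
Qed.

End Comb.

Lemma STEP V (G : {set {set lit V}}) v : is_clauseset G -> min_unsat G ->
  (forall w, ~~ one_singular G w) -> singular G v ->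
  [/\ is_clauseset (DP v G), min_unsat (DP v G), (forall w, ~~ one_singular (DP v G) w) &
     exists2 E, E \in shyp_edges G & v \in E /\ shyp_edges (DP v G) = shyp_edges G :\ E].
Proof.
move=> HG HMU Hno Hs.
have [b [Hdx Hk]] : exists b, ldeg G (v, b) = 1 /\ 2 <= ldeg G (compl (v, b)).
  move: (Hno v) Hs; rewrite /one_singular /singular /compl /=.
  case: (eqVneq (ldeg G (v, true)) 1) => H1 /=.
    by move=> H2 H3; exists true; split => //=; lia.
  by move=> _ H3; exists false; split => /=; lia.
pose x := (v, b).
have Hxv : x.1 = v by [].
have [C HC HxC] := ldeg1_ex Hdx.
have HxL : x \in sing_lits G by rewrite in_L Hdx eqxx andbT.
split.
- exact: (DP_clauseset HG HMU Hxv HC HxC Hdx).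
- exact: (DP_MU HG HMU Hxv HC HxC Hdx).
- exact: (no1_DP HG HMU Hxv HC HxC Hdx Hk Hno).
- exists (varC (C :&: sing_lits G)).
    apply/imsetP; exists C => //; rewrite inE HC; apply/set0Pn; exists x.
    by rewrite inE HxC HxL.
  split; first by apply/in_varC; exists x; rewrite // inE HxC HxL.
  exact: (edges_DP HG HMU Hxv HC HxC Hdx Hk Hno).
Qed.

Section Main.
Variable V : finType.
Implicit Types (G : {set {set lit V}}).

Lemma shyp_mem G E : E \in shyp_edges G ->
  exists2 C, C \in G & E = varC (C :&: sing_lits G).
Proof. by move=> /imsetP [C]; rewrite inE => /andP[HC _] ->; exists C. Qed.

Lemma shyp_disj G : (forall w, ~~ one_singular G w) -> disj (shyp_edges G).
Proof.
move=> Hno E1 E2 u /shyp_mem [C1 H1 ->] /shyp_mem [C2 H2 ->].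
move=> /in_varC [z1 Hz1 E1u] /in_varC [z2 Hz2 E2u].
by rewrite (EDGE Hno H1 H2 Hz1 Hz2); [|rewrite E1u E2u].
Qed.

Lemma shyp_sing G E v : E \in shyp_edges G -> v \in E -> singular G v.
Proof.
move=> /shyp_mem [C HC ->] /in_varC [z]; rewrite inE => /andP[_]; rewrite in_L.
by move=> /andP[Hs _] <-.
Qed.

Lemma shyp_sub G E : E \in shyp_edges G -> E \subset varF G.
Proof.
move=> /shyp_mem [C HC ->]; apply/subsetP => u /in_varC [z]; rewrite inE => /andP[Hz _] <-.
by apply/bigcupP; exists C => //; apply: varC_in Hz.
Qed.

Lemma nonsing_iff G : nonsingular G <-> shyp_edges G = set0.
Proof.
split.
  move=> Hn; apply/setP => E; rewrite inE; apply/negbTE/negP => HE.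
  move: HE => /imsetP [C]; rewrite inE => /andP[HC /set0Pn [z Hz]] _.
  by move: Hz; rewrite inE in_L => /andP[_ /andP[Hs _]]; move: (Hn z.1); rewrite Hs.
move=> H0 w; apply/negP => Hs.
have [b Hb] : exists b, ldeg G (w, b) = 1.
  move: Hs; rewrite /singular; case: (eqVneq (ldeg G (w, true)) 1) => H1.
    by exists true.
  by move=> H2; exists false; lia.
have [C HC HzC] := ldeg1_ex Hb.
have : varC (C :&: sing_lits G) \in shyp_edges G.
  apply/imsetP; exists C => //; rewrite inE HC; apply/set0Pn; exists (w, b).
  by rewrite inE HzC in_L Hs Hb eqxx.
by rewrite H0 inE.
Qed.

Lemma MAIN s : forall G, is_clauseset G -> min_unsat G ->
  (forall w, ~~ one_singular G w) ->
  (singular_tuple G s /\ nonsingular (DPs s G) <-> Rh (shyp_edges G) s).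
Proof.
elim: s => [|v s IH] G HG HMU Hno /=.
  by rewrite -nonsing_iff; split => [[]|].
split.
  move=> [[Hs Ht] Hn].
  have [HG' HMU' Hno' [E HE [HvE Heq]]] := STEP HG HMU Hno Hs.
  exists E => //; split => //; rewrite -Heq; apply/IH => //.
move=> [E HE [HvE HR]].
have Hs := shyp_sing HE HvE.
have [HG' HMU' Hno' [E0 HE0 [HvE0 Heq]]] := STEP HG HMU Hno Hs.
have EE : E0 = E by apply: (shyp_disj Hno HE0 HE HvE0 HvE).
have [Ht Hn] : singular_tuple (DP v G) s /\ nonsingular (DPs s (DP v G)).
  by apply/IH => //; rewrite Heq EE.
by [].
Qed.

End Main.

Theorem lemma57 (V : finType) (F : {set {set lit V}}) :
  is_clauseset F -> min_unsat F -> (forall v : V, ~~ one_singular F v) ->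
  (forall T : {set V},
     (exists s : seq V, maximal_singular_tuple F s /\ T = [set x in s])
     <-> is_min_transversal F T) /\
  (forall s : seq V,
     maximal_singular_tuple F s <-> (uniq s /\ is_min_transversal F [set x in s])).
Proof.
move=> HG HMU Hno.
have Hd := shyp_disj Hno.
have HW : forall E, E \in shyp_edges F -> E \subset varF F by move=> E; apply: shyp_sub.
have P2 : forall s : seq V,
    maximal_singular_tuple F s <-> (uniq s /\ is_min_transversal F [set x in s]).
  move=> s; rewrite /maximal_singular_tuple (MAIN s HG HMU Hno) (COMB s Hd).
  rewrite (Xh_mt _ Hd HW); by [].
split => // T; split.
  by move=> [s [/P2 [_ H] ->]].
move=> Hmt; exists (enum T); split.
  apply/P2; split; first exact: enum_uniq.
  by have -> : [set x in enum T] = T by apply/setP => u; rewrite inE mem_enum.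
by apply/setP => u; rewrite inE mem_enum.
Qed.
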